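(* For every program $P$, all terms $s,t$ and all $w\in P^*$, if $s\hookrightarrow_w t$ then $\langle s\rangle\leadsto_w\langle t\rangle$.
   Context: Fix a signature $\Sigma$ and a countably infinite set $X$ of variables disjoint from $\Sigma$; terms are elements of $T(\Sigma,X)$, goals are finite sequences $\langle s_1,\dots,s_n\rangle$ of terms, substitutions are maps $X\to T(\Sigma,X)$ moving finitely many variables, applied homomorphically to terms and elementwise to goals; $\mathit{Var}$ denotes the set of variables. A renaming is a substitution bijective on $X$; a variant is an image under a renaming; $\mathit{mgu}$ denotes a most general unifier. A program is a set of rules $(u,\bar v)$ with $u$ a term and $\bar v$ a goal. For a rule $r$: $\hookrightarrow_r=\{(u\theta,v\theta)\mid r=(u,\langle v\rangle),\ \mathit{Var}(v)\subseteq\mathit{Var}(u),\ \theta\text{ a substitution}\}$. For a goal $\bar s=\langle s_1,\dots,s_n\rangle$, $\bar s\leadsto_r\bar t$ iff for some $1\le i\le n$ and some variant $(u',\langle v_1,\dots,v_m\rangle)$ of $r$ variable-disjoint from $\bar s$, $s_i$ and $u'$ unify, $\eta=\mathit{mgu}(s_i,u')$, and $\bar t=\langle s_1,\dots,s_{i-1},v_1,\dots,v_m,s_{i+1},\dots,s_n\rangle\eta$. For $w=\langle r_1,\dots,r_n\rangle\in P^*$, $\hookrightarrow_w=\hookrightarrow_{r_1}\circ\cdots\circ\hookrightarrow_{r_n}$ and $\leadsto_w=\leadsto_{r_1}\circ\cdots\circ\leadsto_{r_n}$ (apply $r_1$ first), each being the identity relation when $w=\epsilon$. *)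

(* Defs.v *)
From Stdlib Require Import List Arith.
Import ListNotations.
Set Implicit Arguments.

(* Terms T(Sigma, X): function symbols of type F (applied to a list of
   arguments), variables X := nat (a countably infinite set, disjoint from F). *)
Inductive term (F : Type) : Type :=
| Var : nat -> term F
| Fun : F -> list (term F) -> term F.
Arguments Var {F} _.
Arguments Fun {F} _ _.

Definition goal (F : Type) := list (term F).

Fixpoint subst {F : Type} (s : nat -> term F) (t : term F) : term F :=
  match t with
  | Var x => s x
  | Fun f ts => Fun f (map (subst s) ts)
  end.

Definition subst_goal {F : Type} (s : nat -> term F) (g : goal F) : goal F :=
  map (subst s) g.

Fixpoint vars {F : Type} (t : term F) : list nat :=
  match t with
  | Var x => [x]
  | Fun _ ts => flat_map vars ts
  end.
Definition vars_goal {F : Type} (g : goal F) : list nat := flat_map vars g.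

Definition is_subst {F : Type} (s : nat -> term F) : Prop :=
  exists l : list nat, forall x, ~ In x l -> s x = Var x.

Definition is_renaming {F : Type} (r : nat -> term F) : Prop :=
  is_subst r /\
  exists p : nat -> nat,
    (forall x, r x = Var (p x)) /\
    (forall x y, p x = p y -> x = y) /\
    (forall y, exists x, p x = y).

Definition unifier {F : Type} (s : nat -> term F) (t1 t2 : term F) : Prop :=
  subst s t1 = subst s t2.

Definition is_mgu {F : Type} (eta : nat -> term F) (t1 t2 : term F) : Prop :=
  is_subst eta /\ unifier eta t1 t2 /\
  forall sigma, is_subst sigma -> unifier sigma t1 t2 ->
    exists delta, is_subst delta /\ forall x, sigma x = subst delta (eta x).

Definition rule (F : Type) := (term F * goal F)%type.
Definition program (F : Type) := rule F -> Prop.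

Definition hook_step {F : Type} (r : rule F) (s t : term F) : Prop :=
  exists (u v : term F) (theta : nat -> term F),
    r = (u, [v]) /\ incl (vars v) (vars u) /\ is_subst theta /\
    s = subst theta u /\ t = subst theta v.

Definition deriv_step {F : Type} (r : rule F) (sb tb : goal F) : Prop :=
  exists (i : nat) (rho eta : nat -> term F),
    i < length sb /\ is_renaming rho /\
    (forall x, In x (vars (subst rho (fst r)) ++ vars_goal (subst_goal rho (snd r))) ->
               ~ In x (vars_goal sb)) /\
    is_mgu eta (nth i sb (Var 0)) (subst rho (fst r)) /\
    tb = subst_goal eta (firstn i sb ++ subst_goal rho (snd r) ++ skipn (S i) sb).

Inductive along {F A : Type} (step : rule F -> A -> A -> Prop)
  : list (rule F) -> A -> A -> Prop :=
| along_nil : forall a, along step [] a a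
| along_cons : forall r w a b c,
    step r a b -> along step w b c -> along step (r :: w) a c.

Definition hook {F : Type} (w : list (rule F)) : term F -> term F -> Prop :=
  along hook_step w.
Definition deriv {F : Type} (w : list (rule F)) : goal F -> goal F -> Prop :=
  along deriv_step w.

(* Main.v *)
Require Import Defs.
From Stdlib Require Import List.
Import ListNotations.
From Stdlib Require Import Arith Lia.

Section Aux.
Variable F : Type.

Fixpoint term_ind' (P : term F -> Prop) (HV : forall x, P (Var x))
  (HF : forall f ts, Forall P ts -> P (Fun f ts)) (t : term F) : P t :=
  match t with
  | Var x => HV x
  | Fun f ts => HF f ts ((fix go (l : list (term F)) : Forall P l :=
       match l with
       | [] => Forall_nil _
       | a :: l' => Forall_cons _ (term_ind' P HV HF a) (go l')
       end) ts)
  end.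

Lemma subst_comp (s1 s2 : nat -> term F) t :
  subst s2 (subst s1 t) = subst (fun x => subst s2 (s1 x)) t.
Proof.
  induction t as [x|f ts IH] using term_ind'; simpl; auto.
  f_equal. rewrite map_map. apply map_ext_in. intros a Ha.
  rewrite Forall_forall in IH. auto.
Qed.

Lemma subst_ext (s1 s2 : nat -> term F) t :
  (forall x, In x (vars t) -> s1 x = s2 x) -> subst s1 t = subst s2 t.
Proof.
  induction t as [x|f ts IH] using term_ind'; simpl; intros H.
  - apply H; simpl; auto.
  - f_equal. apply map_ext_in. intros a Ha.
    rewrite Forall_forall in IH. apply IH; auto.
    intros x Hx. apply H. apply in_flat_map. eauto.
Qed.

Lemma map_eq_in {A B} (f g : A -> B) l a : map f l = map g l -> In a l -> f a = g a.
Proof.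
  induction l; simpl; intros H Hi; [contradiction|].
  injection H; intros. destruct Hi; subst; auto.
Qed.

Lemma subst_agree (s1 s2 : nat -> term F) t :
  subst s1 t = subst s2 t -> forall x, In x (vars t) -> s1 x = s2 x.
Proof.
  induction t as [y|f ts IH] using term_ind'; simpl; intros H x Hx.
  - destruct Hx as [->|[]]; auto.
  - injection H; intros Hm. apply in_flat_map in Hx. destruct Hx as [a [Ha Hx]].
    rewrite Forall_forall in IH. eapply IH; eauto. eapply map_eq_in; eauto.
Qed.

Lemma vars_subst (s : nat -> term F) t x :
  In x (vars (subst s t)) -> exists y, In y (vars t) /\ In x (vars (s y)).
Proof.
  induction t as [y|f ts IH] using term_ind'; simpl; intros H.
  - exists y; auto.
  - apply in_flat_map in H. destruct H as [a [Ha Hx]].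
    apply in_map_iff in Ha. destruct Ha as [b [<- Hb]].
    rewrite Forall_forall in IH. destruct (IH b Hb Hx) as [y [Hy1 Hy2]].
    exists y; split; auto. apply in_flat_map; eauto.
Qed.

Lemma subst_var t : subst (@Var F) t = t.
Proof.
  induction t as [x|f ts IH] using term_ind'; simpl; auto.
  f_equal. rewrite Forall_forall in IH.
  transitivity (map id ts); [apply map_ext_in; auto | apply map_id].
Qed.

Definition maxl (l : list nat) := fold_right max 0 l.
Lemma maxl_in x l : In x l -> x <= maxl l.
Proof. induction l; simpl; intros H; [contradiction|]. destruct H; subst; lia || (specialize (IHl H); lia). Qed.

Definition swp (N x : nat) := if x <? N then x + N else if x <? N + N then x - N else x.
Lemma swp_inv N x : swp N (swp N x) = x.
Proof.
  unfold swp. destruct (Nat.ltb_spec x N).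
  - destruct (Nat.ltb_spec (x+N) N); [lia|]. destruct (Nat.ltb_spec (x+N) (N+N)); lia.
  - destruct (Nat.ltb_spec x (N+N)).
    + destruct (Nat.ltb_spec (x-N) N); lia.
    + destruct (Nat.ltb_spec x N); [lia|]. destruct (Nat.ltb_spec x (N+N)); lia.
Qed.

Lemma step_ok (r : rule F) s t : hook_step r s t -> deriv_step r [s] [t].
Proof.
  intros (u & v & theta & -> & Hinc & Hth & -> & ->).
  set (N := S (maxl (vars u))).
  (* N must also dominate vars of s = subst theta u *)
  set (M := S (maxl (vars u ++ vars (subst theta u)))).
  set (rho := fun x => @Var F (swp M x)).
  set (eta := fun x => if M <=? x then
                 if in_dec Nat.eq_dec (x - M) (vars u) then theta (x - M) else Var x
               else Var x).
  assert (HuM : forall x, In x (vars u) -> x < M).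
  { intros x Hx. unfold M. pose proof (maxl_in x (vars u ++ vars (subst theta u))). 
    assert (In x (vars u ++ vars (subst theta u))) by (apply in_or_app; auto). intuition lia. }
  assert (HsM : forall x, In x (vars (subst theta u)) -> x < M).
  { intros x Hx. unfold M. pose proof (maxl_in x (vars u ++ vars (subst theta u))). 
    assert (In x (vars u ++ vars (subst theta u))) by (apply in_or_app; auto). intuition lia. }
  assert (Hrho : forall x, In x (vars u) -> rho x = Var (x + M)).
  { intros x Hx. unfold rho, swp. specialize (HuM x Hx).
    destruct (Nat.ltb_spec x M); [reflexivity | lia]. }
  assert (Heta : forall x, In x (vars u) -> eta (x + M) = theta x).
  { intros x Hx. unfold eta. destruct (Nat.leb_spec M (x + M)); [|lia].
    replace (x + M - M) with x by lia. destruct (in_dec Nat.eq_dec x (vars u)); tauto. }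
  assert (Hetau : subst eta (subst rho u) = subst theta u).
  { rewrite subst_comp. apply subst_ext. intros x Hx. rewrite Hrho by auto. simpl. auto. }
  assert (Hetas : subst eta (subst theta u) = subst theta u).
  { rewrite <- (subst_var (subst theta u)) at 2. apply subst_ext. intros x Hx.
    unfold eta. specialize (HsM x Hx). destruct (Nat.leb_spec M x); [lia|auto]. }
  exists 0, rho, eta. simpl. repeat split.
  - lia.
  - exists (seq 0 (M + M)). intros x Hx. unfold rho, swp.
    assert (~ x < M + M) by (intro; apply Hx; apply in_seq; lia).
    destruct (Nat.ltb_spec x M); [lia|]. destruct (Nat.ltb_spec x (M+M)); [lia|auto].
  - exists (swp M). split; [reflexivity|]. split.
    + intros x y H. rewrite <- (swp_inv M x), <- (swp_inv M y), H. auto.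
    + intros y. exists (swp M y). apply swp_inv.
  - intros x Hx Hs. rewrite app_nil_r in Hs. specialize (HsM x Hs).
    unfold vars_goal in Hx. simpl in Hx. rewrite app_nil_r in Hx.
    apply in_app_or in Hx. destruct Hx as [Hx|Hx]; apply vars_subst in Hx;
      destruct Hx as [y [Hy Hx]]; [|apply Hinc in Hy];
      rewrite Hrho in Hx by auto; simpl in Hx; destruct Hx as [<-|[]]; lia.
  - exists (map (fun x => x + M) (vars u)). intros x Hx. unfold eta.
    destruct (Nat.leb_spec M x); auto.
    destruct (in_dec Nat.eq_dec (x - M) (vars u)); auto.
    exfalso. apply Hx. apply in_map_iff. exists (x - M). split; auto; lia.
  - unfold unifier. rewrite Hetau, Hetas. reflexivity.
  - intros sigma Hsig Hun. exists sigma. split; auto. intros x.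
    unfold unifier in Hun. rewrite !subst_comp in Hun.
    pose proof (subst_agree _ _ _ Hun) as Hag.
    unfold eta. destruct (Nat.leb_spec M x); [|reflexivity].
    destruct (in_dec Nat.eq_dec (x - M) (vars u)) as [Hi|]; [|reflexivity].
    specialize (Hag _ Hi). pose proof (Hrho _ Hi) as Hr. unfold rho in Hr, Hag.
    injection Hr as Hr. rewrite Hr in Hag. simpl in Hag.
    replace (x - M + M) with x in Hag by lia. auto.
  - unfold subst_goal. simpl. f_equal. rewrite subst_comp. apply subst_ext.
    intros x Hx. apply Hinc in Hx. rewrite Hrho by auto. simpl. symmetry; auto.
Qed.

End Aux.

Theorem lemma8 (F : Type) (P : program F) (s t : term F) (w : list (rule F)) :
  Forall P w -> hook w s t -> deriv w [s] [t].
Proof.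
  intros _ H. unfold hook, deriv in *. induction H.
  - constructor.
  - econstructor; [apply step_ok; eauto | auto].
Qed.
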